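(* For real numbers $x\ge y\ge2$ we have $$ \Phi(x,y)\le\frac1{\log x}\int_1^x\frac{\Phi(t,y)}{t}\,dt+\frac1{\log x}\sum_{\substack{d\le x\\P(\varphi(d))\le y}}\Phi\left(\frac xd,y\right)\Lambda(d), $$ where the sum is over positive integers $d\le x$ with $P(\varphi(d))\le y$.
   Context: $\varphi$ is Euler's totient function and $\Lambda$ is the von Mangoldt function. $P(n)$ denotes the largest prime factor of an integer $n>1$, with $P(1)=1$. For real $t\ge1$ and $y\ge2$, $\Phi(t,y)$ denotes the number of positive integers $n\le t$ with $P(\varphi(n))\le y$. *)

(* Defs.v *)
From Stdlib Require Import Reals List.
From Coquelicot Require Import Coquelicot.
From mathcomp Require Import ssreflect ssrbool ssrnat prime.
From mathcomp Require seq.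

Open Scope R_scope.

(* P(n): largest prime factor of n > 1, with P(1) = 1 (mathcomp max_pdiv). *)
Definition Pmax (n : nat) : nat := max_pdiv n.

Definition smooth_phi (y : R) (n : nat) : bool :=
  if Rle_dec (INR (Pmax (totient n))) y then true else false.

Definition le_real (n : nat) (t : R) : bool :=
  if Rle_dec (INR n) t then true else false.

Definition upto (t : R) : list nat :=
  filter (fun n => le_real n t) (seq 1 (Z.to_nat (up t))).

Definition Phi (t y : R) : R :=
  INR (length (filter (smooth_phi y) (upto t))).

(* von Mangoldt: Lambda(d) = log p if d = p^k with p prime, k >= 1; else 0. *)
Definition vonMangoldt (d : nat) : R :=
  if ((1 < d)%N && eqn (seq.size (primes d)) 1) then ln (INR (pdiv d)) else 0.

Definition sumR (l : list R) : R := fold_right Rplus 0 l.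

(* Main.v *)
Require Import Defs.
From Stdlib Require Import Reals List Lia Lra.
From Coquelicot Require Import Coquelicot.
From mathcomp Require Import ssreflect ssrbool eqtype ssrnat div prime.
From mathcomp Require seq bigop.
From mathcomp Require Import zify.
Open Scope R_scope.

Module NT.
Import seq bigop.

Lemma totient_dvd d n : (0 < n)%N -> d %| n -> totient d %| totient n.
Proof.
move=> n0 dn; have d0 : (0 < d)%N := dvdn_gt0 n0 dn.
rewrite !totientE //.
apply: (@dvdn_trans (\prod_(p <- primes d) (p.-1 * p ^ (logn p n).-1))).
  elim/big_ind2: _ => //; first by move=> *; apply: dvdn_mul.
  move=> p _; apply: dvdn_mul => //; apply: dvdn_exp2l.
  have := dvdn_leq_log p n0 dn; case: (logn p d) => // a; case: (logn p n) => // b.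
rewrite [X in _ %| X](bigID (mem (primes d))) /=.
apply: dvdn_mulr.
have -> : \prod_(i <- primes n | i \in primes d) (i.-1 * i ^ (logn i n).-1) = \prod_(i <- primes d) (i.-1 * i ^ (logn i n).-1).
  rewrite -big_filter; apply: perm_big.
  apply: uniq_perm; rewrite ?filter_uniq ?primes_uniq // => p.
  rewrite mem_filter; case pd: (p \in primes d) => //=.
  move: pd; rewrite !mem_primes n0 => /and3P[-> _ pd] /=.
  exact: dvdn_trans pd dn.
by [].
Qed.

End NT.

Lemma max_pdiv_dvd_le a b : (0 < b)%N -> a %| b -> (max_pdiv a <= max_pdiv b)%N.
Proof.
move=> b0 ab; case: (ltnP 1 a) => a1.
  apply: max_pdiv_max.
  have := pi_max_pdiv a; rewrite a1 !inE !mem_primes => /and3P[pp _ pd].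
  by rewrite pp b0 (dvdn_trans pd ab).
by case: a a1 {ab} => [|[|]].
Qed.

Lemma smooth_dvd y d n : (0 < n)%N -> d %| n -> smooth_phi y n -> smooth_phi y d.
Proof.
move=> n0 dn; rewrite /smooth_phi /Pmax.
case: (Rle_dec _ y) => // H _; case: (Rle_dec _ y) => // H'; exfalso; apply: H'.
apply: Rle_trans H; apply: le_INR; apply/leP; apply: max_pdiv_dvd_le.
  by rewrite totient_gt0.
exact: NT.totient_dvd.
Qed.

Lemma vM_ge0 d : 0 <= vonMangoldt d.
Proof.
rewrite /vonMangoldt; case: ifP => _; last by apply: Rle_refl.
rewrite -ln_1; apply: ln_le; first by apply: Rlt_0_1.
have := pdiv_gt0 d; move/leP => h; apply: (le_INR 1); exact: h.
Qed.

Lemma vM_pk p k : prime p -> (0 < k)%N -> vonMangoldt (p ^ k) = ln (INR p).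
Proof.
move=> pp; case: k => // k _; rewrite /vonMangoldt.
rewrite primesX // primes_prime // pdiv_pfactor //.
have -> : (1 < p ^ k.+1)%N.
  apply: leq_trans (prime_gt1 pp) _; rewrite -{1}(expn1 p); apply: leq_pexp2l => //.
  exact: prime_gt0.
by [].
Qed.


Definition S (l : list nat) (f : nat -> R) := sumR (map f l).
Definition ind (b : bool) : R := if b then 1 else 0.

Lemma S_nil f : S nil f = 0. Proof. by []. Qed.
Lemma S_cons a l f : S (a :: l) f = f a + S l f. Proof. by []. Qed.

Lemma S_plus l f g : S l (fun a => f a + g a) = S l f + S l g.
Proof. elim: l => [|a l IH] /=; rewrite ?S_nil ?S_cons; [lra| rewrite IH; lra]. Qed.

Lemma S_scal l c f : S l (fun a => c * f a) = c * S l f.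
Proof. elim: l => [|a l IH]; rewrite ?S_nil ?S_cons; [lra| rewrite IH; lra]. Qed.

Lemma S_le l f g : (forall a, In a l -> f a <= g a) -> S l f <= S l g.
Proof.
elim: l => [|a l IH] H; rewrite ?S_nil ?S_cons; first lra.
apply: Rplus_le_compat; first by apply: H; left.
by apply: IH => b hb; apply: H; right.
Qed.

Lemma S_ext l f g : (forall a, In a l -> f a = g a) -> S l f = S l g.
Proof.
move=> H; apply: Rle_antisym; apply: S_le => a ha; rewrite H //; apply: Rle_refl.
Qed.

Lemma S_ge0 l f : (forall a, In a l -> 0 <= f a) -> 0 <= S l f.
Proof.
elim: l => [|a l IH] H; rewrite ?S_nil ?S_cons; first lra.
have := H a (in_eq a l); have : 0 <= S l f by apply: IH => b hb; apply: H; right.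
lra.
Qed.

Lemma S_swap l1 l2 (f : nat -> nat -> R) :
  S l1 (fun a => S l2 (fun b => f a b)) = S l2 (fun b => S l1 (fun a => f a b)).
Proof.
elim: l1 => [|a l IH].
  rewrite S_nil; elim: l2 => [|b l2 IH2]; rewrite ?S_nil ?S_cons -?IH2 ?S_nil; lra.
by rewrite S_cons IH -S_plus; apply: S_ext => b _; rewrite S_cons.
Qed.

Lemma S_pick0 l c f : ~ In c l ->
  S l (fun a => if a == c then f a else 0) = 0.
Proof.
elim: l => [|a l IH] hc; first by [].
rewrite S_cons IH; last by move=> h; apply: hc; right.
case: (eqVneq a c) => [e|_]; last lra.
by subst; case: hc; left.
Qed.

Lemma S_pick l c f : NoDup l -> In c l ->
  S l (fun a => if a == c then f a else 0) = f c.
Proof.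
elim: l => [|a l IH] nd hc; first by case: hc.
inversion nd as [|a' l' H1 H2]; subst; rewrite S_cons /=.
case: (eqVneq a c) => [e|ne].
  rewrite S_pick0; last by rewrite -e.
  rewrite e; lra.
rewrite IH //; first lra.
case: hc => // e; by rewrite e eqxx in ne.
Qed.

Lemma in_seq1 a N : In a (List.seq 1 N) <-> (0 < a)%N /\ (a <= N)%N.
Proof.
rewrite in_seq; split.
  by case=> h1 h2; split; apply/leP; lia.
by case=> /leP h1 /leP h2; lia.
Qed.

Lemma INR_muln a b : INR (a * b) = INR a * INR b.
Proof. by rewrite -mult_INR. Qed.

Lemma vonM_ineq N n : (0 < n)%N -> (n <= N)%N ->
  ln (INR n) <= S (List.seq 1 N) (fun d => ind (d %| n) * vonMangoldt d).
Proof.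
elim/ltn_ind: n => n IH n0 nN.
case: (ltnP 1 n) => n1; last first.
  have -> : n = 1%N by apply/eqP; rewrite eqn_leq n1 n0.
  rewrite ln_1; apply: S_ge0 => d _; rewrite /ind; case: ifP => _;
  have := vM_ge0 d; lra.
set p := pdiv n; have pp : prime p by apply: pdiv_prime.
set m := n %/ p.
have nmp : n = (m * p)%N by rewrite /m divnK // /p pdiv_dvd.
have m0 : (0 < m)%N by move: n0; rewrite nmp muln_gt0 => /andP[].
have mn : (m < n)%N by rewrite /m ltn_Pdiv // prime_gt1.
set k := logn p n.
have kdef : k = (logn p m).+1.
  by rewrite /k nmp (lognM p m0 (prime_gt0 pp)) (logn_prime p pp) eqxx addn1.
have d0n : p ^ k %| n by apply: pfactor_dvdnn.
have d0m : ~~ (p ^ k %| m) by rewrite pfactor_dvdn // kdef ltnn.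
have d0I : In (p ^ k)%N (List.seq 1 N).
  apply/in_seq1; split; first by rewrite expn_gt0 prime_gt0.
  exact: leq_trans (dvdn_leq n0 d0n) nN.
have IHm := IH m mn m0 (leq_trans (ltnW mn) nN).
have -> : ln (INR n) = ln (INR m) + vonMangoldt (p ^ k).
  rewrite vM_pk // ?kdef // nmp INR_muln ln_mult //; apply: lt_0_INR; apply/ltP => //.
  exact: prime_gt0.
apply: Rle_trans (_ : S (List.seq 1 N) (fun d => ind (d %| m) * vonMangoldt d
     + (if d == (p ^ k)%N then vonMangoldt d else 0)) <= _).
  rewrite S_plus S_pick //; first lra.
  exact: seq_NoDup.
apply: S_le => d _.
have := vM_ge0 d.
case: (eqVneq d (p ^ k)%N) => [->|ne].
  rewrite /ind d0n (negbTE d0m); lra.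
rewrite /ind; case: ifP => dm.
  have dn : d %| n by rewrite nmp; apply: dvdn_mulr.
  rewrite dn; lra.
case: ifP => _; lra.
Qed.

Lemma S_zero l : S l (fun _ => 0) = 0.
Proof. by elim: l => [|a l IH]; rewrite ?S_nil ?S_cons ?IH //; lra. Qed.

Lemma ind_ge0 b : 0 <= ind b.
Proof. rewrite /ind; case: b; lra. Qed.

Lemma S_app l1 l2 f : S (l1 ++ l2) f = S l1 f + S l2 f.
Proof.
elim: l1 => [|a l IH]; first by rewrite S_nil /=; lra.
rewrite -app_comm_cons !S_cons IH; lra.
Qed.

Lemma len_filter (P : nat -> bool) l : INR (length (filter P l)) = S l (fun a => ind (P a)).
Proof.
elim: l => [|a l IH]; first by [].
rewrite S_cons -IH /ind; have -> : filter P (a :: l) = if P a then a :: filter P l else filter P l by [].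
case: (P a); last lra.
have -> : length (a :: filter P l) = (length (filter P l)).+1 by [].
rewrite S_INR; lra.
Qed.

Lemma S_filter (P : nat -> bool) l f : S (filter P l) f = S l (fun a => if P a then f a else 0).
Proof.
elim: l => [|a l IH] //=; rewrite S_cons -IH; case: (P a) => //=; rewrite ?S_cons; lra.
Qed.

Lemma le_real_iff n t : le_real n t = true <-> INR n <= t.
Proof. rewrite /le_real; case: Rle_dec => h; split => // _; exfalso; lra. Qed.

Lemma up_bound {n t} : INR n <= t -> (n <= Z.to_nat (up t))%N.
Proof.
move=> h; have [h1 _] := archimed t.
have : (Z.of_nat n < up t)%Z by apply: lt_IZR; rewrite -INR_IZR_INZ; lra.
move=> hz; apply/leP; lia.
Qed.

Lemma S_trunc K0 r F : (forall n, (K0 < n)%N -> F n = 0) ->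
  S (List.seq 1 (K0 + r)) F = S (List.seq 1 K0) F.
Proof.
move=> hF; rewrite seq_app S_app.
rewrite (S_ext (List.seq (1 + K0) r) _ (fun _ => 0)); last first.
  move=> a /in_seq [h1 _]; apply: hF; apply/ltP; lia.
rewrite S_zero; lra.
Qed.

Lemma Phi_sum t y N : (forall n, INR n <= t -> (n <= N)%N) ->
  Phi t y = S (List.seq 1 N) (fun n => ind (smooth_phi y n && le_real n t)).
Proof.
move=> hN; rewrite /Phi /upto len_filter S_filter.
set K := Z.to_nat (up t).
set F := fun n => ind (smooth_phi y n && le_real n t).
rewrite (S_ext _ _ F); last first.
  by move=> a _; rewrite /F /ind; case: (le_real a t); case: (smooth_phi y a).
have hF : forall n, (minn K N < n)%N -> F n = 0.
  move=> n; rewrite /F /ind; case hl: (le_real n t); last by case: (smooth_phi y n).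
  move/le_real_iff: hl => hl; rewrite gtn_min => /orP[] h.
    by have := up_bound hl; rewrite leqNgt h.
  by have := hN n hl; rewrite leqNgt h.
have gen : forall M, (minn K N <= M)%N -> S (List.seq 1 M) F = S (List.seq 1 (minn K N)) F.
  by move=> M hM; rewrite -(subnKC hM); apply: S_trunc.
by rewrite (gen K) ?geq_minl // (gen N) ?geq_minr.
Qed.

Definition hh y (n : nat) (t : R) : R := if smooth_phi y n && le_real n t then / t else 0.

Lemma RI_zero (f : R -> R) a b : a <= b -> (forall t, a < t < b -> f t = 0) -> is_RInt f a b 0.
Proof.
move=> ab hf.
have := is_RInt_const a b 0; change (scal (b - a) 0) with ((b - a) * 0); rewrite Rmult_0_r.
apply: is_RInt_ext => t; rewrite Rmin_left // Rmax_right // => ht; by rewrite hf.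
Qed.

Lemma RI_one y n x : 1 <= INR n -> 1 <= x ->
  is_RInt (hh y n) 1 x (if smooth_phi y n && le_real n x then ln x - ln (INR n) else 0).
Proof.
move=> n1 x1; rewrite /hh.
case sm: (smooth_phi y n) => /=; last by apply: RI_zero.
case: (Rle_dec (INR n) x) => hnx.
  have -> : le_real n x = true by apply/le_real_iff.
  have H1 : is_RInt (fun t => if le_real n t then / t else 0) 1 (INR n) 0.
    apply: RI_zero => // t [_ ht].
    by case e: (le_real n t) => //; move/le_real_iff: e; lra.
  have H2 : is_RInt (fun t => if le_real n t then / t else 0) (INR n) x (ln x - ln (INR n)).
    have hd : forall t, Rmin (INR n) x <= t <= Rmax (INR n) x -> is_derive ln t (/ t).
      rewrite Rmin_left // Rmax_right // => t [ht _]; apply: is_derive_ln; lra.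
    have hc : forall t, Rmin (INR n) x <= t <= Rmax (INR n) x -> continuous (fun t => / t) t.
      rewrite Rmin_left // Rmax_right // => t [ht _]; apply: continuous_Rinv; lra.
    have H := is_RInt_derive ln (fun t => / t) (INR n) x hd hc.
    change (minus (ln x) (ln (INR n))) with (ln x - ln (INR n)) in H.
    apply: (is_RInt_ext _ _ _ _ _ _ H) => t; rewrite Rmin_left // Rmax_right // => [[ht _]].
    by have -> : le_real n t = true by apply/le_real_iff; lra.
  have H := is_RInt_Chasles _ _ _ _ _ _ H1 H2.
  change (plus 0 (ln x - ln (INR n))) with (0 + (ln x - ln (INR n))) in H.
  by rewrite Rplus_0_l in H.
have -> : le_real n x = false by case e: (le_real n x) => //; move/le_real_iff: e.
apply: RI_zero => // t [_ ht].
by case e: (le_real n t) => //; move/le_real_iff: e; lra.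
Qed.

Lemma RI_sum y x l : 1 <= x -> (forall n, In n l -> 1 <= INR n) ->
  is_RInt (fun t => S l (fun n => hh y n t)) 1 x
    (S l (fun n => if smooth_phi y n && le_real n x then ln x - ln (INR n) else 0)).
Proof.
move=> x1; elim: l => [|a l IH] hl.
  by apply: RI_zero => //; lra.
have Ha := RI_one y a x (hl a (in_eq a l)) x1.
have Hl := IH (fun n hn => hl n (in_cons a n l hn)).
exact: (is_RInt_plus _ _ _ _ _ _ Ha Hl).
Qed.

Lemma RInt_val y x : 1 <= x ->
  RInt (fun t => Phi t y / t) 1 x =
  S (List.seq 1 (Z.to_nat (up x)))
    (fun n => if smooth_phi y n && le_real n x then ln x - ln (INR n) else 0).
Proof.
move=> x1; apply: is_RInt_unique.
have := RI_sum y x (List.seq 1 (Z.to_nat (up x))) x1.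
have hI : forall n, In n (List.seq 1 (Z.to_nat (up x))) -> 1 <= INR n.
  move=> n /in_seq1 [h _]; apply: (le_INR 1); apply/leP; exact: h.
move/(_ hI); apply: is_RInt_ext => t; rewrite Rmin_left // Rmax_right // => [[t1 tx]].
rewrite (Phi_sum t y (Z.to_nat (up x))); last first.
  by move=> n hn; apply: up_bound; lra.
rewrite /Rdiv Rmult_comm -S_scal; apply: S_ext => n _.
rewrite /hh /ind; case: (_ && _); lra.
Qed.

Lemma KEY y x : 0 < x ->
  S (List.seq 1 (Z.to_nat (up x))) (fun n => ind (smooth_phi y n && le_real n x) * ln (INR n))
  <= S (List.seq 1 (Z.to_nat (up x)))
       (fun d => ind (smooth_phi y d && le_real d x) * (Phi (x / INR d) y * vonMangoldt d)).
Proof.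
move=> x0.
set N := Z.to_nat (up x); set I := List.seq 1 N.
set Q := fun n => smooth_phi y n && le_real n x.
have ndI : NoDup I by apply: seq_NoDup.
apply: (Rle_trans _ (S I (fun n => ind (Q n) * S I (fun d => ind (d %| n) * vonMangoldt d)))).
  apply: S_le => n /in_seq1 [n0 nN]; apply: Rmult_le_compat_l; first exact: ind_ge0.
  exact: vonM_ineq.
rewrite (S_ext I _ (fun n => S I (fun d => ind (Q n) * (ind (d %| n) * vonMangoldt d)))); last first.
  by move=> n _; rewrite S_scal.
rewrite S_swap; apply: S_le => d /in_seq1 [d0 dN].
rewrite (S_ext I _ (fun n => vonMangoldt d * ind (Q n && (d %| n)))); last first.
  move=> n _; rewrite /ind; case: (Q n) => /=; case: (d %| n) => /=; ring.
rewrite S_scal.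
rewrite (_ : ind (Q d) * (Phi (x / INR d) y * vonMangoldt d) = vonMangoldt d * (ind (Q d) * Phi (x / INR d) y)); last by ring.
apply: Rmult_le_compat_l; first exact: vM_ge0.
have dpos : 0 < INR d by apply: lt_0_INR; apply/ltP.
rewrite -/(Q d); case Qd: (Q d); last first.
  rewrite (S_ext I _ (fun _ => 0)) ?S_zero /ind; first lra.
  move=> n /in_seq1 [n0 nN].
  case e: (Q n && (d %| n)) => //; move/andP: e => [Qn dn].
  move: Qd; rewrite /Q; move/andP: Qn => [sn ln] .
  rewrite (smooth_dvd y d n n0 dn sn) /=.
  have : INR d <= INR n by apply: le_INR; apply/leP; apply: dvdn_leq.
  by move/le_real_iff: ln => ln hdn; have -> : le_real d x = true by apply/le_real_iff; lra.
rewrite /ind Rmult_1_l.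
rewrite (Phi_sum (x / INR d) y N); last first.
  move=> n hn; apply: up_bound; apply: Rle_trans hn _.
  have : 1 <= INR d by apply: (le_INR 1); apply/leP.
  move=> h1; rewrite /Rdiv; rewrite -{2}(Rmult_1_r x); apply: Rmult_le_compat_l; first lra.
  rewrite -Rinv_1; apply: Rinv_le_contravar; lra.
set F := fun n => if Q n && (d %| n) then 1 else 0.
rewrite (S_ext I F (fun n => S I (fun m => if m == n %/ d then F n else 0))); last first.
  move=> n /in_seq1 [n0 nN].
  case e: (Q n && (d %| n)).
    rewrite S_pick //.
    move/andP: e => [_ dn]; apply/in_seq1; split.
      by rewrite divn_gt0 // dvdn_leq.
    exact: leq_trans (leq_div n d) nN.
  rewrite (S_ext I _ (fun _ => 0)) ?S_zero /F ?e //.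
  by move=> m _; case: (_ == _).
rewrite S_swap; apply: S_le => m /in_seq1 [m0 mN].
rewrite (S_ext I _ (fun n => if n == (m * d)%N then F n else 0)); last first.
  move=> n _; case dn: (d %| n); last first.
    by rewrite /F dn andbF; case: (_ == _); case: (_ == _).
  have ndm : n = (n %/ d * d)%N by rewrite divnK.
  case: (eqVneq m (n %/ d)) => [e|ne].
    by rewrite -e in ndm; rewrite -ndm eqxx.
  case: (eqVneq n (m * d)%N) => // e.
  by exfalso; move/eqP: ne; apply; rewrite e mulnK.
case: (in_dec Nat.eq_dec (m * d)%N I) => hin; last first.
  by rewrite S_pick0 //; exact: ind_ge0.
rewrite (S_pick I (m * d)%N F) // /F.
case e: (Q (m * d)%N && (d %| m * d)); last exact: ind_ge0.
move/andP: e => [/andP[smd lmd] _].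
have md0 : (0 < m * d)%N by rewrite muln_gt0 m0 d0.
rewrite (smooth_dvd y m (m * d) md0 (dvdn_mulr d (dvdnn m)) smd) /=.
have -> : le_real m (x / INR d) = true; last by rewrite /ind; lra.
apply/le_real_iff; move/le_real_iff: lmd; rewrite INR_muln => h.
apply: (Rmult_le_reg_r (INR d)) => //.
rewrite (_ : x / INR d * INR d = x) //; field; lra.
Qed.

Theorem lemma3p1 (x y : R) (Hy : 2 <= y) (Hxy : y <= x) :
  Phi x y <=
    / ln x * RInt (fun t => Phi t y / t) 1 x
    + / ln x * sumR (map (fun d => Phi (x / INR d) y * vonMangoldt d)
                         (filter (smooth_phi y) (upto x))).
Proof.
have x1 : 1 <= x by lra.
have lnx : 0 < ln x by rewrite -ln_1; apply: ln_increasing; lra.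
rewrite RInt_val //.
set N := Z.to_nat (up x).
have HPhi := Phi_sum x y N (fun n hn => up_bound hn).
rewrite (_ : sumR _ = S (filter (smooth_phi y) (upto x))
                       (fun d => Phi (x / INR d) y * vonMangoldt d)) //.
rewrite /upto S_filter S_filter -/N.
set A := S _ (fun n => if _ then ln x - _ else 0).
set B := S _ _.
have HB : B = S (List.seq 1 N)
   (fun d => ind (smooth_phi y d && le_real d x) * (Phi (x / INR d) y * vonMangoldt d)).
  rewrite /B; apply: S_ext => d _; rewrite /ind.
  case: (le_real d x); case: (smooth_phi y d) => /=; ring.
have K := KEY y x ltac:(lra).
have HP : Phi x y * ln x =
  A + S (List.seq 1 N) (fun n => ind (smooth_phi y n && le_real n x) * ln (INR n)).
  rewrite HPhi Rmult_comm -S_scal /A -S_plus; apply: S_ext => n _; rewrite /ind.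
  case: (_ && _); ring.
have hP : Phi x y * ln x <= A + B by rewrite HB; fold N in K; lra.
rewrite -Rmult_plus_distr_l.
rewrite (_ : Phi x y = / ln x * (Phi x y * ln x)); last by field; lra.
apply: Rmult_le_compat_l => //.
by left; apply: Rinv_0_lt_compat.
Qed.
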